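(* Let $r \ge 3$ and $2 \le k \le r$ be integers and let $n \ge 2\binom{2k-1}{k}^{-1}(r-k)r^{k+1}$. Let $\mathcal{H}$ be an intersecting $r$-uniform $n$-vertex hypergraph with $\delta_{r-1}^+(\mathcal{H}) \ge k$ having the maximum number of hyperedges among all intersecting $r$-uniform $n$-vertex hypergraphs with minimum positive co-degree at least $k$. Then $\tau(\mathcal{H}) = k$.
   Context: A hypergraph is intersecting if every two of its hyperedges share at least one vertex. For a non-empty $r$-uniform hypergraph $\mathcal{H}$, the minimum positive co-degree $\delta_{r-1}^+(\mathcal{H})$ is the largest integer $k$ such that every $(r-1)$-set of vertices that is contained in at least one hyperedge of $\mathcal{H}$ is contained in at least $k$ distinct hyperedges of $\mathcal{H}$; for the empty hypergraph it is $0$. A transversal of $\mathcal{H}$ is a set of vertices meeting every hyperedge, and $\tau(\mathcal{H})$ is the minimum size of a transversal. *)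

(* Defs.v *)
From mathcomp Require Import all_boot.
Set Implicit Arguments. Unset Strict Implicit. Unset Printing Implicit Defensive.

Definition hgraph (n : nat) := {set {set 'I_n}}.

Definition uniform n (r : nat) (H : hgraph n) : bool :=
  [forall e in H, #|e| == r].

Definition intersecting n (H : hgraph n) : bool :=
  [forall e in H, forall f in H, e :&: f != set0].

Definition hdeg n (H : hgraph n) (S : {set 'I_n}) : nat :=
  #|[set e in H | S \subset e]|.

(* The default #|H| is harmless since every such degree is <= #|H|. *)
Definition min_pos_codeg n (r : nat) (H : hgraph n) : nat :=
  \big[minn/#|H|]_(S : {set 'I_n} | (#|S| == r.-1) && [exists e in H, S \subset e])
     hdeg H S.

Definition transversal n (H : hgraph n) (T : {set 'I_n}) : bool :=
  [forall e in H, T :&: e != set0].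

(* transversal number: minimum size of a transversal (default n is never
   smaller than any candidate) *)
Definition tau n (H : hgraph n) : nat :=
  \big[minn/n]_(T : {set 'I_n} | transversal H T) #|T|.

(* Main.v *)
Require Import Defs.
From mathcomp Require Import all_boot.
From mathcomp Require Import zify.
Set Implicit Arguments. Unset Strict Implicit. Unset Printing Implicit Defensive.

Lemma expn_monl m n e : m <= n -> m ^ e <= n ^ e.
Proof. by case: e => [//|e] h; rewrite leq_exp2r. Qed.

Lemma bern N q m : q <= N -> N ^ m <= (N - q) ^ m + m * q * N ^ m.-1.
Proof.
move=> qN; elim: m => [|m IH]; first by rewrite !expn0 /=.
have h1 : (N - q) ^ m <= N ^ m by apply: expn_monl; rewrite leq_subr.
have h2 : m * N ^ m.-1 * N = m * N ^ m by case: m {IH h1} => [|m] //=; rewrite expnSr mulnA.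
rewrite !expnS /=.
set a := (N - q) ^ m in h1 IH *; set b := N ^ m in h1 h2 IH *; set c := N ^ m.-1 in h2 IH *.
nia.
Qed.

Lemma binX a b t : b <= a -> 'C(a + t, b) * (a.+1 - b) ^ t <= 'C(a, b) * a.+1 ^ t.
Proof.
move=> ba; elim: t => [|t IH]; first by rewrite addn0 !expn0.
have hid : (a + t).+1 * 'C(a + t, b) = ((a + t).+1 - b) * 'C((a + t).+1, b).
  by rewrite -mul_bin_down.
rewrite addnS !expnS.
set X := 'C((a + t).+1, b) in hid *; set Y := 'C(a + t, b) in hid IH.
set P := (a.+1 - b) ^ t in IH *; set Q := a.+1 ^ t in IH *.
set Z := 'C(a, b) in IH *.
have pos : 0 < (a + t).+1 - b by lia.
rewrite -(leq_pmul2r pos).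
have e1 : X * ((a.+1 - b) * P) * ((a + t).+1 - b) = (a.+1 - b) * (a + t).+1 * (Y * P).
  by rewrite [X * _]mulnC -mulnA [X * _]mulnC -hid mulnACA [P * Y]mulnC.
rewrite e1.
have e2 : (a.+1 - b) * (a + t).+1 <= a.+1 * ((a + t).+1 - b) by nia.
apply: (leq_trans (leq_mul e2 IH)).
nia.
Qed.

Lemma binC k : 0 < k -> 'C(2 * k - 1, k) <= 4 ^ k.-1.
Proof.
move=> k0; set m := 2 * k - 1.
pose X := [set A : {set 'I_m} | #|A| == k].
pose Y := [set A : {set 'I_m} | #|A| == k.-1].
have cX : #|X| = 'C(m, k) by rewrite card_draws card_ord.
have cY : #|Y| = 'C(m, k.-1) by rewrite card_draws card_ord.
have dXY : X :&: Y = set0.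
  apply/setP=> A; rewrite !inE; apply/negbTE; apply/negP=> /andP[/eqP -> /eqP]; lia.
have sub : X :|: Y \subset powerset [set: 'I_m].
  by apply/subsetP=> A _; rewrite inE subsetT.
have := subset_leq_card sub; rewrite card_powerset cardsT card_ord cardsU dXY cards0 subn0 cX cY.
have -> : 'C(m, k.-1) = 'C(m, k).
  by rewrite -bin_sub /m; [congr 'C(_, _); lia | lia].
have -> : 4 ^ k.-1 = 2 ^ (2 * k - 2) by rewrite (_ : 4 = 2 ^ 2) // -expnM; congr (_ ^ _); lia.
have -> : m = (2 * k - 2).+1 by rewrite /m; lia.
rewrite expnS; lia.
Qed.

Lemma arith_n r k n : 3 <= r -> 2 <= k -> k < r ->
  2 * (r - k) * r ^ k.+1 <= n * 'C(2 * k - 1, k) ->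
  r + k <= n.
Proof.
move=> r3 k2 kr hyp.
have hC : 'C(2 * k - 1, k) <= r ^ k.-1.
  have [r3e | r4] := eqVneq r 3.
    have k2e : k = 2 by lia.
    by rewrite k2e r3e.
  apply: (leq_trans (binC (ltnW k2))); apply: expn_monl; lia.
have Cpos : 0 < 'C(2 * k - 1, k) by rewrite bin_gt0; lia.
have er : r = k + (r - k) by lia.
have eR : r ^ k.+1 = r * r * r ^ k.-1.
  by rewrite -mulnA -!expnS; congr (_ ^ _); lia.
move: (r - k) er hyp => p er hyp.
have p1 : 1 <= p by lia.
move: ('C(2 * k - 1, k)) hC Cpos hyp => C hC Cpos hyp.
rewrite eR in hyp *.
move: (r ^ k.-1) hC eR hyp => s hC eR hyp.
have spos : 0 < s by lia.
have hn : 2 * p * (r * r) <= n.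
  have : 2 * p * (r * r) * C <= n * C.
    apply: leq_trans hyp.
    by rewrite [X in _ <= X]mulnA leq_mul2l hC orbT.
  by rewrite leq_pmul2r.
have rr : 3 * r <= r * r by rewrite leq_mul2r r3 orbT.
have prr : 3 * p * r <= p * (r * r) by rewrite -mulnA mulnCA leq_mul2l rr orbT.
have pr : r <= p * r by rewrite leq_pmull.
lia.
Qed.

Lemma arith r k n : 3 <= r -> 2 <= k -> k < r ->
  2 * (r - k) * r ^ k.+1 <= n * 'C(2 * k - 1, k) ->
  r ^ k.+1 * 'C(n - k.+1, r - k.+1) < 'C(2 * k - 1, k) * 'C(n - (2 * k - 1), r - k).
Proof.
move=> r3 k2 kr hyp.
have hC : 'C(2 * k - 1, k) <= r ^ k.-1.
  have [r3e | r4] := eqVneq r 3.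
    have k2e : k = 2 by lia.
    by rewrite k2e r3e.
  apply: (leq_trans (binC (ltnW k2))); apply: expn_monl; lia.
have Cpos : 0 < 'C(2 * k - 1, k) by rewrite bin_gt0; lia.
have eb : r - k.+1 = (r - k) - 1 by lia.
rewrite eb.
have er : r = k + (r - k) by lia.
have eR : r ^ k.+1 = r * r * r ^ k.-1.
  by rewrite -mulnA -!expnS; congr (_ ^ _); lia.
move: (r - k) er hyp => p er hyp.
have p1 : 1 <= p by lia.
move: ('C(2 * k - 1, k)) hC Cpos hyp => C hC Cpos hyp.
rewrite eR in hyp *.
move: (r ^ k.-1) hC eR hyp => s hC eR hyp.
have spos : 0 < s by lia.
have hn : 2 * p * (r * r) <= n.
  have : 2 * p * (r * r) * C <= n * C.
    apply: leq_trans hyp.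
    by rewrite [X in _ <= X]mulnA leq_mul2l hC orbT.
  by rewrite leq_pmul2r.
have rr : 3 * r <= r * r by rewrite leq_mul2r r3 orbT.
have prr : 3 * p * r <= p * (r * r) by rewrite -mulnA mulnCA leq_mul2l rr orbT.
have hN : 4 * k * p + p <= n - (2 * k - 1).
  have : 6 * p * r <= n by lia.
  rewrite er; nia.
have [N eN] : exists N, N = n - (2 * k - 1) by eexists.
rewrite -eN in hN *.
have h3 : 3 * C * (2 * k - 1) < 2 * p * (r * r * s).
  have h5 : 3 * (2 * k - 1) < 2 * p * (r * r) by nia.
  have h6 : 3 * C * (2 * k - 1) <= 3 * (2 * k - 1) * s.
    by rewrite mulnAC leq_mul2l hC orbT.
  apply: (leq_ltn_trans h6).
  by rewrite [X in _ < X]mulnA ltn_pmul2r.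
have h4 : 4 * p * (r * r * s) < 3 * C * N.
  have : C * N + C * (2 * k - 1) = C * n by rewrite -mulnDr eN; congr (_ * _); lia.
  lia.
clear hyp h3 hn rr prr hC eR eb er kr r3.
have hX := @binX (N - 1) (p - 1) (k - 1) ltac:(lia).
have eM : N - 1 + (k - 1) = n - k.+1 by lia.
have ea : (N - 1).+1 = N by lia.
rewrite eM ea in hX.
have eq2 : N - (p - 1) = N - (p - 1) by [].
have hB := @bern N (p - 1) (k - 1) ltac:(lia).
have eW : N ^ (k - 1) = N * N ^ (k - 1).-1 by rewrite -expnS; congr (_ ^ _); lia.
have Zpos : 0 < (N - (p - 1)) ^ (k - 1) by rewrite expn_gt0; lia.
move: ((N - (p - 1)) ^ (k - 1)) hX hB Zpos => Z hX hB Zpos.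
move: (N ^ (k - 1)) hX hB eW => W hX hB eW.
move: (N ^ (k - 1).-1) hB eW => V hB eW.
have hW : 3 * W <= 4 * Z.
  have : 4 * ((k - 1) * (p - 1) * V) <= W.
    rewrite eW mulnA leq_mul2r.
    apply/orP; right; lia.
  lia.
have CN1pos : 0 < 'C(N - 1, p - 1) by rewrite bin_gt0; lia.
have hdiag : N * 'C(N - 1, p - 1) = p * 'C(N, p).
  have -> : p = (p - 1).+1 by lia.
  by rewrite -mul_bin_diag subn1 -subn1 subSS subn0.
move: ('C(n - k.+1, p - 1)) hX => CM hX.
move: ('C(N - 1, p - 1)) hX CN1pos hdiag => CN1 hX CN1pos hdiag.
have hCM : 3 * CM <= 4 * CN1.
  rewrite -(leq_pmul2r Zpos).
  have h7 : 3 * CM * Z <= 3 * (CN1 * W) by rewrite -mulnA leq_pmul2l.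
  apply: (leq_trans h7).
  have h8 : CN1 * (3 * W) <= CN1 * (4 * Z) by rewrite leq_pmul2l.
  lia.
rewrite -(ltn_pmul2l (_ : 0 < p)) // -(ltn_pmul2l (_ : 0 < 9)) //.
have -> : 9 * (p * (C * 'C(N, p))) = 9 * C * (p * 'C(N, p)) by lia.
rewrite -hdiag.
move: (r * r * s) h4 => R h4.
have h9 : 9 * (p * (R * CM)) <= 3 * (p * R) * (4 * CN1).
  have : 3 * (p * R) * (3 * CM) <= 3 * (p * R) * (4 * CN1) by rewrite leq_mul2l hCM orbT.
  lia.
apply: (leq_ltn_trans h9).
have h10 : 3 * (4 * (p * R)) * CN1 < 3 * (3 * C * N) * CN1.
  by rewrite ltn_pmul2r // ltn_pmul2l //; lia.
lia.
Qed.

Lemma bigmin_geP (I : finType) (P : pred I) (F : I -> nat) x0 k :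
  k <= x0 -> (forall i, P i -> k <= F i) -> k <= \big[minn/x0]_(i | P i) F i.
Proof.
move=> h0 h; apply: (big_ind (fun v => k <= v)) => //.
by move=> a b ha hb; rewrite leq_min ha hb.
Qed.

Lemma bigmin_le (I : finType) (P : pred I) (F : I -> nat) x0 i :
  P i -> \big[minn/x0]_(j | P j) F j <= F i.
Proof.
move=> Pi; move: (mem_index_enum i); elim: (index_enum I) => // j s IH.
rewrite inE big_cons; case/orP => [/eqP <-|his]; first by rewrite Pi geq_minl.
case: (P j); last exact: IH.
exact: leq_trans (geq_minr _ _) (IH his).
Qed.

Lemma bigmin_le0 (I : finType) (P : pred I) (F : I -> nat) x0 :
  \big[minn/x0]_(j | P j) F j <= x0.
Proof.
elim: (index_enum I) => [|j s IH]; first by rewrite big_nil.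
rewrite big_cons; case: (P j) => //.
exact: leq_trans (geq_minr _ _) IH.
Qed.

Lemma card_bigcup_le (I T : finType) (P : pred I) (F : I -> {set T}) :
  #|\bigcup_(i | P i) F i| <= \sum_(i | P i) #|F i|.
Proof.
elim/big_rec2: _ => [|i A m _ IH]; first by rewrite cards0.
apply: leq_trans (leq_card_setU _ _) _; by rewrite leq_add2l.
Qed.

Lemma setUD_sub (T : finType) (S f : {set T}) : S \subset f -> S :|: (f :\: S) = f.
Proof.
move=> /subsetP Sf; apply/setP=> z; rewrite !inE.
by case Sz: (z \in S); rewrite ?orbF ?andbT //= Sf.
Qed.

Lemma hdeg_base n r (H : hgraph n) (S : {set 'I_n}) :
  uniform r H -> hdeg H S <= 'C(n - #|S|, r - #|S|).
Proof.
move=> /forallP uH.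
rewrite /hdeg.
rewrite -(@card_in_imset _ _ (fun f => f :\: S)); last first.
  move=> f g; rewrite !inE => /andP[_ Sf] /andP[_ Sg] e.
  by rewrite -(setUD_sub Sf) -(setUD_sub Sg) e.
have <- : #|~: S| = n - #|S|.
  have h : #|S| + #|~: S| = n by rewrite cardsC card_ord.
  have hS : #|S| <= n by apply: leq_trans (max_card _) _; rewrite card_ord.
  by apply/eqP; rewrite -(eqn_add2l #|S|) h subnKC.
rewrite -cards_draws; apply: subset_leq_card.
apply/subsetP=> B /imsetP[f fin ->]; move: fin; rewrite !inE => /andP[fH Sf].
apply/andP; split.
  by rewrite setDE subsetIr.
rewrite cardsD (setIidPr Sf).
by move: (uH f); rewrite fH => /eqP ->.
Qed.

Lemma branch n r k (H : hgraph n) :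
  uniform r H -> intersecting H -> (forall T, Defs.transversal H T -> k < #|T|) ->
  forall j (S : {set 'I_n}), #|S| + j <= k.+1 ->
  hdeg H S <= r ^ j * 'C(n - (#|S| + j), r - (#|S| + j)).
Proof.
move=> uH iH tH; elim=> [|j IH] S hS.
  by rewrite expn0 mul1n addn0; apply: hdeg_base.
have nT : ~~ Defs.transversal H S.
  by apply/negP=> /tH; rewrite ltnNge; move: hS; rewrite addnS ltnS => h /negP; apply; apply: leq_trans h; apply: leq_addr.
have [e eH Se] : exists2 e, e \in H & S :&: e = set0.
  move: nT; rewrite /Defs.transversal negb_forall => /existsP[e].
  by rewrite negb_imply negbK => /andP[eH /eqP Se]; exists e.
have sub : [set f in H | S \subset f] \subset
           \bigcup_(x in e) [set f in H | x |: S \subset f].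
  apply/subsetP=> f; rewrite inE => /andP[fH Sf].
  move/forallP: iH => /(_ e) /implyP /(_ eH) /forallP /(_ f) /implyP /(_ fH).
  case/set0Pn=> x; rewrite inE => /andP[xe xf].
  apply/bigcupP; exists x => //; rewrite inE fH /=.
  by rewrite subUset sub1set xf Sf.
apply: leq_trans (subset_leq_card sub) _.
apply: leq_trans (card_bigcup_le _ _) _.
have hx : forall x, x \in e -> #|[set f in H | x |: S \subset f]| <=
                             r ^ j * 'C(n - (#|S| + j.+1), r - (#|S| + j.+1)).
  move=> x xe.
  have xS : x \notin S.
    by apply/negP=> xS; move/setP: Se => /(_ x); rewrite !inE xS xe.
  have cx : #|x |: S| = #|S|.+1 by rewrite cardsU1 xS.
  by have := IH (x |: S); rewrite cx addSnnS; apply.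
apply: leq_trans; first by apply: leq_sum => x xe; apply: hx.
rewrite sum_nat_const.
have -> : #|e| = r by move/forallP: uH => /(_ e); rewrite eH => /eqP.
by rewrite expnS mulnA.
Qed.

Lemma one_more (T : finType) (S f : {set T}) :
  S \subset f -> #|f| = #|S|.+1 -> exists2 y, y \notin S & f = y |: S.
Proof.
move=> Sf cf.
have : #|f :\: S| == 1 by rewrite cardsD (setIidPr Sf) cf subSnn.
case/cards1P=> y ey; exists y.
  have : y \in f :\: S by rewrite ey set11.
  by rewrite inE => /andP[].
by rewrite -(setUD_sub Sf) ey setUC.
Qed.

Lemma min_codeg_le n r (H : hgraph n) : min_pos_codeg r H <= #|H|.
Proof. exact: bigmin_le0. Qed.

Lemma codeg_use n r k (H : hgraph n) (S e : {set 'I_n}) :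
  k <= min_pos_codeg r H -> #|S| = r.-1 -> e \in H -> S \subset e -> k <= hdeg H S.
Proof.
move=> hk cS eH Se; apply: leq_trans hk _; apply: bigmin_le.
rewrite cS eqxx /=; apply/existsP; exists e; by rewrite eH.
Qed.

Lemma trans_ge n r k (H : hgraph n) T :
  uniform r H -> 0 < r -> k <= min_pos_codeg r H -> Defs.transversal H T -> k <= #|T|.
Proof.
move=> /forallP uH r0 hk tT.
case: (set_0Vmem H) => [H0 | [e0 e0H]].
  by move: (leq_trans hk (min_codeg_le r H)); rewrite H0 cards0 leqn0 => /eqP ->.
case: (arg_minnP (fun e => #|e :&: T|) e0H) => e eH emin.
have {}eH : e \in H by [].
have {}emin : forall f, f \in H -> #|e :&: T| <= #|f :&: T| by move=> f fH; apply: emin.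
have ce : #|e| = r by move: (uH e); rewrite eH => /eqP.
have : T :&: e != set0 by move/forallP: tT => /(_ e); rewrite eH.
case/set0Pn=> x; rewrite inE => /andP[xT xe].
set S := e :\ x.
have cS : #|S| = r.-1 by rewrite /S (cardsD1 x e) xe in ce; rewrite -ce.
have hS := codeg_use hk cS eH (subD1set e x).
have cST : #|S :&: T| = #|e :&: T|.-1.
  have -> : S :&: T = (e :&: T) :\ x.
    by apply/setP=> z; rewrite !inE; case: (z == x); case: (z \in e).
  by rewrite [in RHS](cardsD1 x (e :&: T)) inE xe xT.
have sub : [set f in H | S \subset f] \subset [set y |: S | y in T].
  apply/subsetP=> f; rewrite inE => /andP[fH Sf].
  have cf : #|f| = #|S|.+1 by move: (uH f); rewrite fH cS prednK // => /eqP.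
  case: (one_more Sf cf) => y yS ef.
  apply/imsetP; exists y => //.
  apply/negPn/negP=> yT.
  have := emin _ fH; rewrite ef.
  have -> : (y |: S) :&: T = S :&: T.
    apply/setP=> z; rewrite !inE; case: eqP => // ->.
    by rewrite (negbTE yT) !andbF.
  rewrite cST.
  have : 0 < #|e :&: T| by apply/card_gt0P; exists x; rewrite inE xe xT.
  by case: #|e :&: T| => // m _; rewrite ltnn.
apply: leq_trans hS _; apply: leq_trans (subset_leq_card sub) _.
exact: leq_imset_card.
Qed.

Lemma codeg_ge n r k (H : hgraph n) :
  uniform r H -> 0 < r -> H != set0 ->
  (forall S e : {set 'I_n}, #|S| = r.-1 -> e \in H -> S \subset e -> k <= hdeg H S) ->
  k <= min_pos_codeg r H.
Proof.
move=> /forallP uH r0 /set0Pn[e0 e0H] hd.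
apply: bigmin_geP.
  have : 0 < #|e0| by move: (uH e0); rewrite e0H => /eqP ->.
  case/card_gt0P=> x xe.
  have cS : #|e0 :\ x| = r.-1.
    by move: (uH e0); rewrite e0H (cardsD1 x e0) xe => /eqP <-.
  apply: leq_trans (hd _ _ cS e0H (subD1set e0 x)) _.
  by apply: subset_leq_card; apply/subsetP=> f; rewrite inE => /andP[].
move=> S /andP[/eqP cS /existsP[e /andP[eH Se]]].
exact: hd cS eH Se.
Qed.

Lemma hdeg_ge n (H : hgraph n) (S Y : {set 'I_n}) :
  [disjoint Y & S] -> (forall y, y \in Y -> y |: S \in H) -> #|Y| <= hdeg H S.
Proof.
move=> dYS hY.
rewrite -(@card_in_imset _ _ (fun y => y |: S)); last first.
  move=> y z yY zY eyz.
  have : y \in z |: S by rewrite -eyz setU11.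
  rewrite in_setU1 => /orP[/eqP // | yS].
  by move: (disjointFr dYS yY); rewrite yS.
apply: subset_leq_card; apply/subsetP=> f /imsetP[y yY ->].
by rewrite inE hY //= subsetUr.
Qed.

Lemma cardC_ord n (S : {set 'I_n}) : #|~: S| = n - #|S|.
Proof.
have h : #|S| + #|~: S| = n by rewrite cardsC card_ord.
have hS : #|S| <= n by apply: leq_trans (max_card _) _; rewrite card_ord.
by apply/eqP; rewrite -(eqn_add2l #|S|) h subnKC.
Qed.

Lemma construct n r k : 2 <= k -> k < r -> r + k <= n ->
  exists H0 : hgraph n, [/\ uniform r H0, intersecting H0, k <= min_pos_codeg r H0 &
     'C(2 * k - 1, k) * 'C(n - (2 * k - 1), r - k) <= #|H0|].
Proof.
move=> k2 kr rkn.
have : 0 < #|[set A : {set 'I_n} | #|A| == 2 * k - 1]|.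
  by rewrite card_draws card_ord bin_gt0; lia.
case/card_gt0P=> A; rewrite inE => /eqP cA.
pose H0 := [set e : {set 'I_n} | (#|e| == r) && (k <= #|e :&: A|)].
have cnt : 'C(2 * k - 1, k) * 'C(n - (2 * k - 1), r - k) <= #|H0|.
  pose D := [set B : {set 'I_n} | B \subset A & #|B| == k].
  pose E := [set B : {set 'I_n} | B \subset ~: A & #|B| == r - k].
  have -> : 'C(2 * k - 1, k) * 'C(n - (2 * k - 1), r - k) = #|setX D E|.
    by rewrite cardsX !cards_draws cardC_ord cA.
  have key : forall B D' : {set 'I_n}, B \subset A -> D' \subset ~: A ->
      [/\ (B :|: D') :&: A = B, (B :|: D') :&: ~: A = D' & B :&: D' = set0].
    move=> B D' /subsetP BA /subsetP DA; split; apply/setP=> z; rewrite !inE.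
    - case Bz: (z \in B); first by rewrite (BA _ Bz).
      by case Dz: (z \in D') => //=; move: (DA _ Dz); rewrite inE => /negbTE ->.
    - case Dz: (z \in D'); first by rewrite orbT; move: (DA _ Dz); rewrite inE.
      by case Bz: (z \in B) => //=; rewrite (BA _ Bz).
    - case Bz: (z \in B) => //=; apply/negP=> Dz.
      by move: (DA _ Dz); rewrite inE (BA _ Bz).
  rewrite -(@card_in_imset _ _ (fun p => p.1 :|: p.2)); last first.
    move=> [B1 D1] [B2 D2]; rewrite !inE /= => /andP[/andP[B1A _] /andP[D1A _]].
    move=> /andP[/andP[B2A _] /andP[D2A _]] e12.
    have [e1 f1 _] := key _ _ B1A D1A; have [e2 f2 _] := key _ _ B2A D2A.
    have -> : B1 = B2 by rewrite -e1 -e2 e12.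
    by have -> : D1 = D2 by rewrite -f1 -f2 e12.
  apply: subset_leq_card; apply/subsetP=> f /imsetP[[B D'] + ->] /=.
  rewrite !inE /= => /andP[/andP[BA /eqP cB] /andP[DA /eqP cD]].
  have [e1 _ e2] := key _ _ BA DA.
  rewrite e1 cB leqnn andbT cardsU e2 cards0 subn0 cB cD; apply/eqP; lia.
have uH0 : uniform r H0.
  by apply/forallP=> e; apply/implyP; rewrite inE => /andP[].
exists H0; split => //.
- apply/forallP=> e; apply/implyP=> eH; apply/forallP=> f; apply/implyP=> fH.
  move: eH fH; rewrite !inE => /andP[_ ke] /andP[_ kf].
  apply/negP=> /eqP ef.
  have dXY : (e :&: A) :&: (f :&: A) = set0.
    apply/setP=> z; move/setP: ef => /(_ z); rewrite !inE.
    by case: (z \in e); case: (z \in f); rewrite ?andbF.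
  have sub : (e :&: A) :|: (f :&: A) \subset A by rewrite subUset !subsetIr.
  have := subset_leq_card sub; rewrite cardsU dXY cards0 subn0 cA.
  lia.
- apply: codeg_ge => //; first lia.
  + apply/set0Pn; apply/card_gt0P; apply: leq_trans cnt.
    by rewrite muln_gt0 !bin_gt0; apply/andP; split; lia.
  move=> S e cS eH Se.
  move: (eH); rewrite inE => /andP[/eqP ce ke].
  have r0 : 0 < r by lia.
  case: (leqP k #|S :&: A|) => hSA.
  + apply: leq_trans (hdeg_ge (Y := ~: S) _ _).
      by rewrite cardC_ord cS; lia.
      by rewrite disjoints_subset.
    move=> y; rewrite inE => yS.
    rewrite inE cardsU1 yS cS add1n prednK // eqxx /=.
    apply: leq_trans hSA _; apply: subset_leq_card; apply: setSI; exact: subsetUr.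
  + have cf : #|e| = #|S|.+1 by rewrite ce cS prednK.
    have [z zS ez] := one_more Se cf.
    have hz : #|e :&: A| <= #|S :&: A|.+1.
      have sub : e :&: A \subset z |: (S :&: A).
        by apply/subsetP=> w; rewrite ez !inE; case: (w == z); case: (w \in S).
      by apply: leq_trans (subset_leq_card sub) _; rewrite cardsU1; case: (z \in _).
    have eqSA : #|S :&: A| = k.-1 by lia.
    apply: leq_trans (hdeg_ge (Y := A :\: S) _ _).
      by rewrite cardsD setIC eqSA cA; lia.
      by rewrite disjoints_subset setDE subsetIr.
    move=> y; rewrite !inE => /andP[yS yA].
    rewrite cardsU1 yS cS add1n prednK // eqxx /=.
    have -> : (y |: S) :&: A = y |: (S :&: A).
      by apply/setP=> w; rewrite !inE; case: eqP => [->|]; rewrite ?yA.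
    by rewrite cardsU1 inE (negbTE yS) eqSA; lia.
Qed.

Theorem lemma8 (r k n : nat) (H : hgraph n) :
  3 <= r -> 2 <= k -> k <= r ->
  2 * (r - k) * r ^ k.+1 <= n * 'C(2 * k - 1, k) ->
  uniform r H -> intersecting H -> k <= min_pos_codeg r H ->
  (forall H' : hgraph n, uniform r H' -> intersecting H' ->
     k <= min_pos_codeg r H' -> #|H'| <= #|H|) ->
  tau H = k.
Proof.
move=> r3 k2 kr hyp uH iH hk hmax.
have r0 : 0 < r by lia.
have [e0 e0H _] : exists2 e0, e0 \in H & true.
  case: (set_0Vmem H) => [H0 | [e0 e0H]]; last by exists e0.
  by move: (leq_trans hk (min_codeg_le r H)); rewrite H0 cards0; lia.
have ce0 : #|e0| = r by move/forallP: uH => /(_ e0); rewrite e0H => /eqP.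
have kn : k <= n.
  by apply: leq_trans kr _; rewrite -ce0; apply: leq_trans (max_card _) _; rewrite card_ord.
have lower : forall T, Defs.transversal H T -> k <= #|T|.
  by move=> T; apply: trans_ge uH r0 hk.
apply: anti_leq; rewrite /tau (bigmin_geP kn lower) andbT.
suff [T tT cT] : exists2 T, Defs.transversal H T & #|T| <= k.
  by apply: leq_trans cT; apply: bigmin_le.
have [klt|keq] : k < r \/ k = r by lia.
  2: {
  exists e0; last by rewrite ce0 keq.
  apply/forallP=> e; apply/implyP=> eH.
  by move/forallP: iH => /(_ e0) /implyP /(_ e0H) /forallP /(_ e) /implyP /(_ eH). }
case: (boolP [exists T : {set 'I_n}, Defs.transversal H T && (#|T| <= k)]).
  by case/existsP=> T /andP[tT cT]; exists T.
rewrite negb_exists => /forallP nT.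
have tH : forall T, Defs.transversal H T -> k < #|T|.
  by move=> T tT; move: (nT T); rewrite tT /= -ltnNge.
have hb := branch uH iH tH (j := k.+1) (S := set0).
rewrite cards0 add0n leqnn in hb.
have eH : hdeg H set0 = #|H|.
  by rewrite /hdeg; congr (#|pred_of_set _|); apply/setP=> e; rewrite inE sub0set andbT.
rewrite eH in hb; have {}hb := hb isT.
have rkn := arith_n r3 k2 klt hyp.
have [H0 [uH0 iH0 kH0 cH0]] := construct k2 klt rkn.
have := hmax H0 uH0 iH0 kH0.
have := arith r3 k2 klt hyp.
lia.
Qed.
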